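(* Let $\alpha_0,\dots,\alpha_{L-1}$ be i.i.d. uniform on $(-\tfrac12,\tfrac12)$, extended $L$-periodically; let $\omega_i=\Delta\alpha_i-[\![\Delta\alpha_i]\!]$, $S=\sum_{i=0}^{L-1}[\![\Delta\alpha_i]\!]$, and let $\sigma$ be the permutation of $\{0,\dots,L-1\}$ with $\omega_{\sigma(0)}<\dots<\omega_{\sigma(L-1)}$. Define $J'_i=-\mathbf 1(i\in\sigma\{L-|S|,\dots,L-1\})$ if $S<0$, $J'_i=0$ if $S=0$, and $J'_i=\mathbf 1(i\in\sigma\{0,\dots,S-1\})$ if $S>0$, and let $$d\equiv\sum_{i=0}^{L-1}i\left([\![\Delta\alpha_i]\!]-J'_i\right)\pmod L,\qquad d\in\{0,\dots,L-1\}.$$ Then $d$ is uniformly distributed on $\{0,\dots,L-1\}$ and independent of $\vec\omega=(\omega_0,\dots,\omega_{L-1})$.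
   Context: $\Delta$ is the periodic discrete Laplacian, $\Delta\alpha_i=\alpha_{i-1}-2\alpha_i+\alpha_{i+1}$ with indices mod $L$; $[\![x]\!]$ is the integer nearest to $x$; $\sigma\{a,\dots,b\}$ denotes the image of the index set $\{a,\dots,b\}$ under $\sigma$; $\mathbf 1(\cdot)$ is the indicator function. *)

(* Defs.v *)
From HB Require Import structures.
From mathcomp Require Import all_boot all_order all_algebra.
From mathcomp Require Import all_classical all_reals all_analysis.
Set Implicit Arguments. Unset Strict Implicit. Unset Printing Implicit Defensive.
Import Order.TTheory GRing.Theory Num.Theory.
Local Open Scope ring_scope.
Local Open Scope classical_set_scope.

(* nearest integer [[x]] := floor (x + 1/2)  (ties have probability zero) *)
Definition rnd (R : realType) (x : R) : int := Num.floor (x + 2^-1).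

Definition lap (R : realType) (L : nat) (a : nat -> R) (i : nat) : R :=
  a ((i + L).-1 %% L)%N - 2 * a (i %% L)%N + a (i.+1 %% L)%N.

Definition omega (R : realType) (L : nat) (a : nat -> R) (i : nat) : R :=
  lap L a i - (rnd (lap L a i))%:~R.

Definition Ssum (R : realType) (L : nat) (a : nat -> R) : int :=
  \sum_(i < L) rnd (lap L a i).

(* the sequence [sigma(0); ...; sigma(L-1)] of indices sorted by increasing
   omega (ties, which have probability zero, broken by index) *)
Definition sigma_seq (R : realType) (L : nat) (a : nat -> R) : seq nat :=
  sort (fun i j => (omega L a i < omega L a j)
                   || ((omega L a i == omega L a j) && (i <= j)%N))
       (iota 0 L).

Definition Jp (R : realType) (L : nat) (a : nat -> R) (i : nat) : int :=
  let S := Ssum L a in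
  let s := sigma_seq L a in
  if S < 0 then - ((i \in drop (L - absz S) s) : nat)%:Z
  else if S == 0 then 0
  else ((i \in take (absz S) s) : nat)%:Z.

Definition dval (R : realType) (L : nat) (a : nat -> R) : int :=
  ((\sum_(i < L) (i%:Z) * (rnd (lap L a i) - Jp L a i)) %% L%:Z)%Z.

(* alpha_0, ..., alpha_{L-1} are measurable, independent, each uniform
   on (-1/2, 1/2): joint law is the product of the uniform laws *)
Definition iid_uniform_half (d : measure_display) (T : measurableType d)
    (R : realType) (P : probability T R) (L : nat) (alpha : nat -> T -> R) :
    Prop :=
  (forall i, (i < L)%N -> measurable_fun setT (alpha i)) /\
  forall B : nat -> set R, (forall i, measurable (B i)) ->
    (P (\bigcap_(i in `I_L) (alpha i @^-1` B i)) =
    \prod_(i < L) (lebesgue_measure (B i `&` [set x : R | (- 2^-1 < x < 2^-1)%R])))%E.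

(* Main.v *)
Require Import Defs.
From HB Require Import structures.
From mathcomp Require Import all_boot all_order all_algebra.
From mathcomp Require Import all_classical all_reals all_analysis.
From mathcomp Require Import measurable_realfun.
From mathcomp Require Import zify ring lra.
Import Order.TTheory GRing.Theory Num.Theory.
Local Open Scope ring_scope.
Local Open Scope classical_set_scope.
Section Lap.
Context (R : realType).

Lemma lap_mod n (y : nat -> R) i : lap n.+1 y i = lap n.+1 y (i %% n.+1)%N.
Proof.
rewrite /lap; congr (y _ - _ * y _ + y _).
- by rewrite !addnS /= modnDml.
- by rewrite modn_mod.
- by rewrite -[in RHS]addn1 modnDml addn1.
Qed.

Lemma lap_add L (a b : nat -> R) i :
  lap L (fun j => a j + b j) i = lap L a i + lap L b i.
Proof. rewrite /lap; ring. Qed.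

Lemma idx_prev0 n : ((0 + n.+1).-1 %% n.+1 = n)%N.
Proof. by rewrite add0n /= modn_small. Qed.
Lemma idx_prevS n (j : 'I_n) : (((lift ord0 j) + n.+1).-1 %% n.+1 = j)%N.
Proof. by rewrite /= /bump /= add0n modnDr modn_small // ltnS ltnW. Qed.
Lemma idx_nextL n : ((ord_max : 'I_n.+1).+1 %% n.+1 = 0)%N.
Proof. by rewrite /= modnn. Qed.
Lemma idx_nextS n (j : 'I_n) : ((widen_ord (leqnSn n) j).+1 %% n.+1 = j.+1)%N.
Proof. by rewrite /= modn_small // ltnS. Qed.
Lemma idx_mid n (i : 'I_n.+1) : (i %% n.+1 = i)%N.
Proof. by rewrite modn_small. Qed.

Lemma sum_prev n (y : nat -> R) :
  \sum_(i < n.+1) y ((i + n.+1).-1 %% n.+1)%N = \sum_(i < n.+1) y i.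
Proof.
rewrite big_ord_recl /= idx_prev0 [RHS]big_ord_recr /= addrC; congr (_ + _).
by apply: eq_bigr => j _; rewrite idx_prevS.
Qed.

Lemma sum_next n (y : nat -> R) :
  \sum_(i < n.+1) y (i.+1 %% n.+1)%N = \sum_(i < n.+1) y i.
Proof.
rewrite big_ord_recr /= modnn [RHS]big_ord_recl /= addrC; congr (_ + _).
by apply: eq_bigr => j _; rewrite idx_nextS.
Qed.

Lemma sum_lap n (y : nat -> R) : \sum_(i < n.+1) lap n.+1 y i = 0.
Proof.
rewrite /lap big_split /= big_split /= sum_prev sum_next sumrN.
have hmid : \sum_(i < n.+1) 2 * y (i %% n.+1)%N = 2 * \sum_(i < n.+1) y i.
  by rewrite mulr_sumr; apply: eq_bigr => i _; rewrite idx_mid.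
rewrite hmid; ring.
Qed.

Lemma wsum_lap n (y : nat -> R) :
  \sum_(i < n.+1) (i%:R) * lap n.+1 y i = n.+1%:R * (y 0%N - y n).
Proof.
rewrite /lap (eq_bigr (fun i : 'I_n.+1 => i%:R * y ((i + n.+1).-1 %% n.+1)%N
   - 2 * (i%:R * y i) + i%:R * y (i.+1 %% n.+1)%N)); last first.
  by move=> i _; rewrite idx_mid; ring.
rewrite !big_split /= sumrN -mulr_sumr.
have hP : \sum_(i < n.+1) i%:R * y ((i + n.+1).-1 %% n.+1)%N =
   \sum_(j < n) j%:R * y j + \sum_(j < n) y j.
  rewrite big_ord_recl /= mul0r add0r -big_split /=.
  by apply: eq_bigr => j _; rewrite idx_prevS /= /bump /= add1n -addn1 natrD; ring.
have hN : \sum_(i < n.+1) i%:R * y (i.+1 %% n.+1)%N =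
   \sum_(j < n) (j.+1)%:R * y j.+1 - \sum_(j < n) y j.+1 + n%:R * y 0%N.
  rewrite big_ord_recr /= modnn; congr (_ + _).
  rewrite -sumrB; apply: eq_bigr => j _; rewrite idx_nextS /= -addn1 natrD; ring.
have hM1 : \sum_(i < n.+1) i%:R * y i = \sum_(j < n) j%:R * y j + n%:R * y n.
  by rewrite big_ord_recr.
have hM2 : \sum_(i < n.+1) i%:R * y i = \sum_(j < n) (j.+1)%:R * y j.+1.
  by rewrite big_ord_recl /= mul0r add0r.
have hC : \sum_(j < n) y j + y n = y 0%N + \sum_(j < n) y j.+1.
  transitivity (\sum_(j < n.+1) y j); first by rewrite big_ord_recr.
  by rewrite big_ord_recl.
have h2M : 2 * \sum_(i < n.+1) i%:R * y i = (\sum_(j < n) j%:R * y j + n%:R * y n)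
   + \sum_(j < n) (j.+1)%:R * y j.+1 by rewrite -hM1 -hM2; ring.
rewrite hP hN h2M.
have hB : \sum_(j < n) y j = y 0%N + \sum_(j < n) y j.+1 - y n by rewrite -hC addrK.
rewrite hB -addn1 natrD; ring.
Qed.
End Lap.
Section Comb.
Context (R : realType).

Definition Jg (L : nat) (r : nat -> int) (rel : rel nat) (i : nat) : int :=
  let S := \sum_(i < L) r i in
  let s := sort rel (iota 0 L) in
  if S < 0 then - ((i \in drop (L - absz S) s) : nat)%:Z
  else if S == 0 then 0
  else ((i \in take (absz S) s) : nat)%:Z.

Definition Dg (L : nat) (r : nat -> int) (rel : rel nat) : int :=
  ((\sum_(i < L) (i%:Z) * (r i - Jg L r rel i)) %% L%:Z)%Z.

Definition ordrel (L : nat) (a : nat -> R) : rel nat := fun i j =>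
  (omega L a i < omega L a j) || ((omega L a i == omega L a j) && (i <= j)%N).

Lemma dval_Dg L (a : nat -> R) :
  dval L a = Dg L (fun i => rnd (lap L a i)) (ordrel L a).
Proof. by []. Qed.

Lemma sort_iota_congr L (rl rl' : rel nat) :
  (forall i j, (i < L)%N -> (j < L)%N -> rl i j = rl' i j) ->
  sort rl (iota 0 L) = sort rl' (iota 0 L).
Proof.
move=> h; rewrite -val_enum_ord sort_map [RHS]sort_map.
have -> : relpre val rl = relpre val rl' :> rel 'I_L.
  apply/funext => i; apply/funext => j; exact: (h _ _ (ltn_ord i) (ltn_ord j)).
by [].
Qed.

Lemma Dg_congr L r r' rel rel' :
  (forall i, (i < L)%N -> r i = r' i) ->
  (forall i j, (i < L)%N -> (j < L)%N -> rel i j = rel' i j) ->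
  Dg L r rel = Dg L r' rel'.
Proof.
move=> hr hrel; rewrite /Dg /Jg.
have -> : \sum_(i < L) r i = \sum_(i < L) r' i by apply: eq_bigr => i _; rewrite (hr _ (ltn_ord i)).
rewrite (@sort_iota_congr L _ _ hrel).
congr (_ %% _)%Z; apply: eq_bigr => i _; by rewrite hr.
Qed.

Lemma Dg_shift L r r' e rel (t : int) :
  (forall i, (i < L)%N -> r' i = r i + e i) ->
  \sum_(i < L) e i = 0 ->
  \sum_(i < L) (i%:Z) * e i = 1 + L%:Z * t ->
  Dg L r' rel = ((Dg L r rel + 1) %% L%:Z)%Z.
Proof.
move=> hr he hie; rewrite /Dg.
have hS : \sum_(i < L) r' i = \sum_(i < L) r i.
  by rewrite (eq_bigr (fun i : 'I_L => r i + e i)) ?big_split /= ?he ?addr0 // => i _; rewrite (hr _ (ltn_ord i)).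
have hJ i : Jg L r' rel i = Jg L r rel i by rewrite /Jg hS.
rewrite modzDml.
rewrite (eq_bigr (fun i : 'I_L => i%:Z * (r i - Jg L r rel i) + i%:Z * e i)); last first.
  by move=> i _; rewrite hJ (hr _ (ltn_ord i)); ring.
rewrite big_split /= hie.
by rewrite -[RHS](modzMDl t); congr (_ %% _)%Z; ring.
Qed.
End Comb.
Arguments ordrel {R}.
Section Leb.
Context (R : realType).
Local Notation leb := (@lebesgue_measure R).

Definition sh (a : R) : R -> R := fun y => y + a.

Lemma msh a : measurable_fun setT (sh a).
Proof. by apply: measurable_funD => //; exact: measurable_cst. Qed.

Lemma msh_pre a (A : set R) : measurable A -> measurable (sh a @^-1` A).
Proof. by move=> mA; rewrite -[_ @^-1` _]setTI; apply: msh. Qed.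

Definition shmu (a : R) (A : set (measurableTypeR R)) : \bar R :=
  leb (sh a @^-1` A).

Section shmu_inst.
Variable a : R.
Let shmu0 : shmu a set0 = 0%E.
Proof. by rewrite /shmu preimage_set0 measure0. Qed.
Let shmu_ge0 A : (0 <= shmu a A)%E.
Proof. exact: measure_ge0. Qed.
Let shmu_sigma_additive : semi_sigma_additive (shmu a).
Proof.
move=> F mF tF mUF; rewrite /shmu preimage_bigcup.
apply: measure_semi_sigma_additive.
- by move=> n; exact (@msh_pre a _ (mF n)).
- apply/trivIsetP => /= i j _ _ ij; rewrite -preimage_setI.
  by move/trivIsetP : tF => /(_ _ _ _ _ ij) ->//; rewrite preimage_set0.
- by rewrite -preimage_bigcup; exact (@msh_pre a _ mUF).
Qed.
HB.instance Definition _ := isMeasure.Build _ _ _ (shmu a)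
  shmu0 shmu_ge0 shmu_sigma_additive.
End shmu_inst.

Lemma leb_shift a (A : set R) : measurable A -> leb (sh a @^-1` A) = leb A.
Proof.
move=> mA; symmetry.
apply: (@lebesgue_measure_unique R (shmu a)) => //.
move=> X /ocitvP [->|[x x12 ->]]; first by rewrite !measure0.
change (leb `]x.1, x.2] = leb (sh a @^-1` `]x.1, x.2])).
have -> : sh a @^-1` `]x.1, x.2] = `](x.1 - a), (x.2 - a)]%classic.
  apply/seteqP; split => y /=; rewrite /sh !in_itv /=.
    by move=> /andP[h1 h2]; apply/andP; split; lra.
  by move=> /andP[h1 h2]; apply/andP; split; lra.
rewrite !lebesgue_measure_itv /= !lte_fin x12 ltrD2r x12.
by rewrite -!EFinB; congr (_%:E); ring.
Qed.
Lemma leb_pt (a : R) : leb [set a] = 0%E.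
Proof. by rewrite -set_itv1 lebesgue_measure_itv /= ltxx. Qed.

Definition Iopen : set R := [set x : R | (- 2^-1 < x < 2^-1)%R].
Definition Khalf : set R := [set x : R | (- 2^-1 <= x < 2^-1)%R].

Lemma mIopen : measurable Iopen.
Proof.
rewrite (_ : Iopen = `](- 2^-1), 2^-1[%classic); first exact: measurable_itv.
by apply/seteqP; split => y; rewrite /Iopen /= in_itv /=.
Qed.

Lemma mKhalf : measurable Khalf.
Proof.
rewrite (_ : Khalf = `[(- 2^-1), 2^-1[%classic); first exact: measurable_itv.
by apply/seteqP; split => y; rewrite /Khalf /= in_itv /=.
Qed.

Lemma leb_half (B : set R) : measurable B -> leb (B `&` Iopen) = leb (B `&` Khalf).
Proof.
move=> mB.
have -> : B `&` Khalf = (B `&` Iopen) `|` (B `&` [set - 2^-1]).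
  apply/seteqP; split => y; rewrite /Iopen /Khalf /=.
    move=> [By /andP[h1 h2]]; rewrite le_eqVlt in h1; case/orP: h1 => [/eqP h|h].
      by right.
    by left; split => //; apply/andP.
  case=> [[By h]|[By yE]]; split => //; [move/andP: h => [h1 h2]|rewrite yE];
    apply/andP; split; lra.
rewrite (measureU (@lebesgue_measure R)) //; last first.
- apply/seteqP; split => y //= [[_ /andP[h1 _]] [_ h]]; lra.
- exact: measurableI.
- apply: measurableI => //; exact: mIopen.
rewrite [X in (_ + X)%E](_ : _ = 0%E) ?adde0 //.
apply/eqP; rewrite eq_le measure_ge0 andbT -(leb_pt (- 2^-1)).
by apply: measureIr.
Qed.
Definition phi (c : R) (y : R) : R := if y + c < 2^-1 then y + c else y + c - 1.

Lemma phi_preE c (B : set R) : phi c @^-1` B =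
  (sh c @^-1` `]-oo, 2^-1[ `&` sh c @^-1` B) `|`
  (~` (sh c @^-1` `]-oo, 2^-1[) `&` sh (c - 1) @^-1` B).
Proof.
apply/seteqP; split => y; rewrite /phi /sh /= in_itv /=.
  case: ifP => h Bh; [left|right]; split => //.
  by rewrite addrA.
case=> [[h Bh]|[h Bh]]; first by rewrite h.
by move/negP/negbTE: h => ->; rewrite -addrA.
Qed.

Lemma phi_pre c (B : set R) : measurable B -> measurable (phi c @^-1` B).
Proof.
move=> mB; rewrite phi_preE; apply: measurableU; apply: measurableI.
- exact: msh_pre.
- exact: msh_pre.
- by apply: measurableC; exact: msh_pre.
- exact: msh_pre.
Qed.

Lemma leb_phi c (B : set R) : 0 <= c < 1 -> measurable B ->
  leb (phi c @^-1` B `&` Iopen) = leb (B `&` Iopen).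
Proof.
move=> /andP[c0 c1] mB.
rewrite leb_half; last exact: phi_pre.
rewrite [RHS]leb_half //.
pose J1 : set R := [set z | c - 2^-1 <= z < 2^-1].
pose J2 : set R := [set z | - 2^-1 <= z < c - 2^-1].
have mJ1 : measurable J1.
  rewrite (_ : J1 = `[(c - 2^-1), 2^-1[%classic); first exact: measurable_itv.
  by apply/seteqP; split => y; rewrite /J1 /= in_itv /=.
have mJ2 : measurable J2.
  rewrite (_ : J2 = `[(- 2^-1), (c - 2^-1)[%classic); first exact: measurable_itv.
  by apply/seteqP; split => y; rewrite /J2 /= in_itv /=.
have -> : phi c @^-1` B `&` Khalf =
    sh c @^-1` (B `&` J1) `|` sh (c - 1) @^-1` (B `&` J2).
  apply/seteqP; split => y; rewrite /phi /sh /Khalf /J1 /J2 /=.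
    case: ifP => h [By /andP[h1 h2]].
      by left; split => //; apply/andP; split; lra.
    move/negbT: h; rewrite -leNgt => h.
    by right; split; [rewrite addrA|apply/andP; split; lra].
  case=> [[By /andP[h1 h2]]|[By /andP[h1 h2]]].
    have -> : y + c < 2^-1 by [].
    by split => //; apply/andP; split; lra.
  have -> : (y + c < 2^-1) = false by apply/negbTE; rewrite -leNgt; lra.
  by split; [rewrite -addrA|apply/andP; split; lra].
rewrite (measureU (@lebesgue_measure R)) //; last first.
- apply/seteqP; split => y //=; rewrite /sh /J1 /J2 /=.
  move=> [[_ /andP[h1 h2]] [_ /andP[h3 h4]]]; lra.
- by apply: msh_pre; exact: measurableI.
- by apply: msh_pre; exact: measurableI.
transitivity (leb (B `&` J1) + leb (B `&` J2))%E.
  by congr (_ + _)%E; apply: leb_shift; exact: measurableI.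
have -> : B `&` Khalf = (B `&` J1) `|` (B `&` J2).
  apply/seteqP; split => y; rewrite /J1 /J2 /Khalf /=; last first.
    by case=> [][By /andP[h1 h2]]; split => //; apply/andP; split; lra.
  move=> [By /andP[h1 h2]].
  case: (lerP (c - 2^-1) y) => h.
    by left; split => //; apply/andP; split.
  by right; split => //; apply/andP; split.
rewrite (measureU (@lebesgue_measure R)) //.
- exact: measurableI.
- exact: measurableI.
- apply/seteqP; split => y //=; rewrite /J1 /J2 /=.
  move=> [[_ /andP[h1 h2]] [_ /andP[h3 h4]]]; lra.
Qed.
End Leb.
Arguments sh {R}. Arguments phi {R}. Arguments Iopen {R}. Arguments Khalf {R}.
Section Shift.
Context (R : realType) (n : nat).
Local Notation L := n.+1.

Definition cj (j : nat) : R := j%:R / L%:R.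
Definition mj (x : nat -> R) (j : nat) : int := if x j + cj j < 2^-1 then 0 else 1.
Definition Phi (x : nat -> R) : nat -> R := fun j => phi (cj j) (x j).
Definition wj (x : nat -> R) (j : nat) : R := cj j - (mj x j)%:~R.

Lemma Phi_eq x : Phi x = fun j => x j + wj x j.
Proof.
apply/funext => j; rewrite /Phi /phi /wj /mj; case: ifP => _ /=; rewrite ?mulr0z; ring.
Qed.

Definition ia i := ((i + L).-1 %% L)%N.
Definition ib i := (i %% L)%N.
Definition ic i := (i.+1 %% L)%N.

Definition Ej (x : nat -> R) (i : nat) : int :=
  (((ia i + ic i) %/ L)%N%:Z - ((2 * ib i) %/ L)%N%:Z)
  - (mj x (ia i) - 2 * mj x (ib i) + mj x (ic i)).

Lemma idx_mod i : ((ia i + ic i) %% L = (2 * ib i) %% L)%N.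
Proof.
rewrite /ia /ib /ic modnDm modnMmr.
have -> : ((i + L).-1 + i.+1 = L + 2 * i)%N by rewrite addnS /=; lia.
by rewrite modnDl.
Qed.

Lemma lap_w x i : lap L (wj x) i = (Ej x i)%:~R.
Proof.
rewrite /lap /wj /Ej /cj -/(ia i) -/(ib i) -/(ic i).
have hL : L%:R != 0 :> R by rewrite pnatr_eq0.
have e1 := divn_eq (ia i + ic i) L.
have e2 := divn_eq (2 * ib i) L.
rewrite idx_mod in e1.
have : ((ia i)%:R + (ic i)%:R - 2 * (ib i)%:R : R) =
   L%:R * (((ia i + ic i) %/ L)%N%:R - ((2 * ib i) %/ L)%N%:R).
  rewrite -natrD -[2 * _]natrM.
  have -> : ((ia i + ic i)%N%:R : R) = (((ia i + ic i) %/ L * L + (2 * ib i) %% L)%N)%:R.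
    by rewrite -e1.
  rewrite [X in _ - X%:R]e2 !natrD !natrM; ring.
move=> h.
rewrite !rmorphB /= !rmorphD /= intrN intrM -!pmulrn.
have hq : (((ia i + ic i) %/ L)%N%:R - ((2 * ib i) %/ L)%N%:R : R) =
   ((ia i)%:R + (ic i)%:R - 2 * (ib i)%:R) / L%:R by rewrite h; field.
rewrite hq; field; by rewrite -natr1 addrC in hL.
Qed.

Lemma lap_Phi x i : lap L (Phi x) i = lap L x i + (Ej x i)%:~R.
Proof. by rewrite Phi_eq lap_add lap_w. Qed.

Lemma rnd_addz (z : R) (k : int) : rnd (z + k%:~R) = rnd z + k.
Proof.
rewrite /rnd; apply: floor_def.
have := floor_itv (z + 2^-1) => /andP[h1 h2].
rewrite !intrD in h2 *; apply/andP; split; lra.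
Qed.

Lemma omega_Phi x i : omega L (Phi x) i = omega L x i.
Proof. by rewrite /omega lap_Phi rnd_addz intrD; ring. Qed.

Lemma ordrel_Phi x : ordrel L (Phi x) = ordrel L x.
Proof. by apply/funext => i; apply/funext => j; rewrite /ordrel !omega_Phi. Qed.

Lemma sum_E x : \sum_(i < L) Ej x i = 0.
Proof.
apply: (@intr_inj R); rewrite raddf_sum /= (eq_bigr (fun i : 'I_L => lap L (wj x) i)).
  by rewrite sum_lap.
by move=> i _; rewrite lap_w.
Qed.

Lemma wsum_E x : \sum_(i < L) (i%:Z) * Ej x i = 1 + L%:Z * (mj x n - mj x 0%N - 1).
Proof.
apply: (@intr_inj R); rewrite raddf_sum /=.
rewrite (eq_bigr (fun i : 'I_L => i%:R * lap L (wj x) i)); last first.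
  by move=> i _; rewrite intrM lap_w -pmulrn.
rewrite wsum_lap /wj /cj !intrD !intrM -!pmulrn !intrD !intrN.
have hL : L%:R != 0 :> R by rewrite pnatr_eq0.
rewrite mul0r; field; by rewrite -natr1 addrC in hL.
Qed.

Lemma dval_Phi x : dval L (Phi x) = ((dval L x + 1) %% L%:Z)%Z.
Proof.
rewrite !dval_Dg ordrel_Phi.
apply: (@Dg_shift L _ _ (Ej x) _ (mj x n - mj x 0%N - 1)).
- by move=> i _; rewrite lap_Phi rnd_addz.
- exact: sum_E.
- exact: wsum_E.
Qed.
End Shift.
Definition seqR (R : realType) := nat -> R.
HB.instance Definition _ (R : realType) := gen_eqMixin (seqR R).
HB.instance Definition _ (R : realType) := gen_choiceMixin (seqR R).
HB.instance Definition _ (R : realType) := isPointed.Build (seqR R) (fun _ => 0).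

Section Meas.
Context (R : realType) (n : nat).
Local Notation L := n.+1.

Definition rect (B : nat -> set R) : set (seqR R) :=
  \bigcap_(i in `I_L) ((fun x => x i) @^-1` B i).
Definition Gr : set (set (seqR R)) :=
  [set A | exists B : nat -> set R, (forall i, measurable (B i)) /\ A = rect B].
Local Notation U := (g_sigma_algebraType Gr).

Lemma mcoord j : (j < L)%N -> measurable_fun setT (fun x : U => x j).
Proof.
move=> jL _ Y mY; rewrite setTI; apply: sub_sigma_algebra.
exists (fun i => if i == j then Y else setT); split.
  by move=> i; case: eqP.
apply/seteqP; split => x /=.
  by move=> Yx i _ /=; case: eqP => [->|].
by move=> h; have := h j jL; rewrite /= eqxx.
Qed.

Lemma mpre (f : U -> R) (B : set R) : measurable_fun setT f -> measurable B ->
  measurable (f @^-1` B).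
Proof. by move=> mf mB; rewrite -[_ @^-1` _]setTI; apply: mf. Qed.

Lemma mlap i : measurable_fun setT (fun x : U => lap L x i).
Proof.
have ltL k : (k %% L < L)%N by rewrite ltn_pmod.
rewrite (_ : (fun x : U => lap L x i) = ((fun x : U => x (ia n i)) \-
   (fun x : U => 2 * x (ib n i))) \+ (fun x : U => x (ic n i))); last first.
  by apply/funext => x; rewrite /lap.
apply: measurable_funD; last by apply: mcoord; exact: ltL.
apply: measurable_funB; first by apply: mcoord; exact: ltL.
by apply: measurable_funM; [exact: measurable_cst|apply: mcoord; exact: ltL].
Qed.

Lemma mlt (f g : U -> R) : measurable_fun setT f -> measurable_fun setT g ->
  measurable [set x | f x < g x].
Proof.
move=> mf mg; rewrite (_ : [set x | f x < g x] = (g \- f) @^-1` `]0, +oo[%classic).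
  by apply: mpre => //; apply: measurable_funB.
by apply/seteqP; split => x; rewrite /= in_itv /= andbT subr_gt0.
Qed.

Lemma meq (f g : U -> R) : measurable_fun setT f -> measurable_fun setT g ->
  measurable [set x | f x == g x].
Proof.
move=> mf mg; rewrite (_ : [set x | f x == g x] = (f \- g) @^-1` [set 0]).
  by apply: mpre => //; apply: measurable_funB.
by apply/seteqP; split => x /=; [move/eqP => ->; rewrite subrr|move/eqP; rewrite subr_eq0].
Qed.
Lemma mrnd i (k : int) : measurable [set x : U | rnd (lap L x i) = k].
Proof.
rewrite (_ : [set x : U | rnd (lap L x i) = k] = (fun x : U => lap L x i) @^-1`
   `[(k%:~R - 2^-1), (k%:~R + 2^-1)[%classic); last first.
  apply/seteqP; split => x /=; rewrite in_itv /=.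
    move=> h; have := floor_itv (lap L x i + 2^-1); rewrite /rnd in h.
    by rewrite h intrD => /andP[h1 h2]; apply/andP; split; lra.
  move=> /andP[h1 h2]; rewrite /rnd; apply: floor_def; rewrite intrD.
  by apply/andP; split; lra.
by apply: mpre => //; exact: mlap.
Qed.

Lemma momega i (B : set R) : measurable B ->
  measurable ((fun x : U => omega L x i) @^-1` B).
Proof.
move=> mB.
rewrite (_ : _ @^-1` B = \bigcup_(k : int) ([set x : U | rnd (lap L x i) = k] `&`
   (fun x : U => lap L x i - k%:~R) @^-1` B)); last first.
  apply/seteqP; split => x /=.
    by move=> h; exists (rnd (lap L x i)) => //.
  by move=> [k _ [h1 h2]]; rewrite /omega h1.
apply: countable_bigcupT_measurable; first exact: countableP.
move=> k; apply: measurableI; first exact: mrnd.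
apply: mpre => //; apply: measurable_funB; [exact: mlap|exact: measurable_cst].
Qed.

Lemma mF (B : nat -> set R) : (forall i, measurable (B i)) ->
  measurable (\bigcap_(i in `I_L) ((fun x : U => omega L x i) @^-1` B i)).
Proof. by move=> mB; apply: bigcap_measurableType => k _; exact: momega. Qed.

Definition V := ({ffun 'I_L -> int} * {ffun 'I_L * 'I_L -> bool})%type.

Definition wv (v : {ffun 'I_L -> int}) (x : U) (i : 'I_L) : R :=
  lap L x i - (v i)%:~R.
Definition ordv v x (i j : 'I_L) : bool :=
  (wv v x i < wv v x j) || ((wv v x i == wv v x j) && (i <= j)%N).
Definition Fib (vp : V) : set U := [set x : U |
  (forall i : 'I_L, rnd (lap L x i) = vp.1 i) /\
  (forall i j : 'I_L, ordv vp.1 x i j = vp.2 (i, j))].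
Definition Dfin (vp : V) : int :=
  Dg L (fun i => vp.1 (inord i)) (fun i j => vp.2 (inord i, inord j)).

Lemma fib_dval vp (x : U) : Fib vp x -> dval L x = Dfin vp.
Proof.
move=> [h1 h2]; rewrite dval_Dg /Dfin; apply: Dg_congr.
  by move=> i iL; rewrite -h1 inordK.
move=> i j iL jL; rewrite -h2 /ordv /wv -!h1 !inordK //.
Qed.

Lemma Dk_eq (k : int) : [set x : U | dval L x = k] =
  \bigcup_(vp : V) (if Dfin vp == k then Fib vp else set0).
Proof.
apply/seteqP; split => x /=.
  move=> hx.
  pose v : {ffun 'I_L -> int} := [ffun i : 'I_L => rnd (lap L x i)].
  pose p : {ffun 'I_L * 'I_L -> bool} := [ffun ij : 'I_L * 'I_L => ordrel L x ij.1 ij.2].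
  have hF : Fib (v, p) x.
    split => [i|i j] /=; first by rewrite ffunE.
    by rewrite !ffunE /ordv /wv !ffunE.
  exists (v, p) => //; rewrite -(@fib_dval _ _ hF) hx eqxx //.
move=> [vp _]; case: eqP => // <- hF; exact: fib_dval.
Qed.

Lemma mFib vp : measurable (Fib vp).
Proof.
rewrite (_ : Fib vp = (\bigcap_(i in [set: 'I_L]) [set x : U | rnd (lap L x i) = vp.1 i])
  `&` (\bigcap_(ij in [set: 'I_L * 'I_L]) [set x : U | ordv vp.1 x ij.1 ij.2 = vp.2 ij])).
  apply: measurableI; apply: fin_bigcap_measurable; try exact: finite_finset.
    by move=> i _; exact: mrnd.
  move=> [i j] _ /=.
  have mlt' : measurable [set x : U | wv vp.1 x i < wv vp.1 x j].
    by apply: mlt; apply: measurable_funB; try exact: mlap; exact: measurable_cst.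
  have meq' : measurable [set x : U | wv vp.1 x i == wv vp.1 x j].
    by apply: meq; apply: measurable_funB; try exact: mlap; exact: measurable_cst.
  have mo : measurable [set x : U | ordv vp.1 x i j].
    rewrite (_ : [set x | _] = [set x : U | wv vp.1 x i < wv vp.1 x j] `|`
       ([set x : U | wv vp.1 x i == wv vp.1 x j] `&` [set _ | (i <= j)%N])).
      apply: measurableU => //; apply: measurableI => //.
      case: (i <= j)%N.
        rewrite (_ : [set _ : U | true] = setT); first exact: measurableT.
        by apply/seteqP; split => x.
      rewrite (_ : [set _ : U | false] = set0); first exact: measurable0.
      by apply/seteqP; split => x.
    apply/seteqP; split => x /=; rewrite /ordv.
      by case/orP => [->|/andP[-> ->]]; [left|right].
    by case => [->//|[-> ->]]; rewrite orbT.
  case: (vp.2 (i, j)).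
    by rewrite (_ : [set x | _] = [set x : U | ordv vp.1 x i j]) //; apply/seteqP.
  rewrite (_ : [set x | _] = ~` [set x : U | ordv vp.1 x i j]); first exact: measurableC.
  by apply/seteqP; split => x /=; [move=> -> |move/negP/negbTE].
apply/seteqP; split => x /=.
  by move=> [h1 h2]; split => [i _|[i j] _]; [exact: h1|exact: h2].
by move=> [h1 h2]; split => [i|i j]; [exact: h1|exact: (h2 (i, j))].
Qed.

Lemma mDk (k : int) : measurable [set x : U | dval L x = k].
Proof.
rewrite Dk_eq; apply: countable_bigcupT_measurable; first exact: countableP.
by move=> vp; case: eqP => _; [exact: mFib|exact: measurable0].
Qed.

Lemma Gr_rect (B : nat -> set R) : (forall i, measurable (B i)) -> Gr (rect B).
Proof. by move=> mB; exists B. Qed.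

Lemma rectT : rect (fun _ => setT) = setT.
Proof. by apply/seteqP; split => x. Qed.

Lemma setI_Gr : setI_closed Gr.
Proof.
move=> _ _ [B [mB ->]] [C [mC ->]]; exists (fun i => B i `&` C i); split.
  by move=> i; apply: measurableI.
apply/seteqP; split => x /=.
  by move=> [h1 h2] i iL; split; [exact: h1|exact: h2].
by move=> h; split => i iL; have [] := h i iL.
Qed.

Lemma Phi_rect (B : nat -> set R) :
  Phi R n @^-1` rect B = rect (fun i => phi (cj R n i) @^-1` B i).
Proof. by apply/seteqP; split => x. Qed.

Lemma mPhi : measurable_fun setT (Phi R n : U -> U).
Proof.
have := @measurability _ _ U U setT (Phi R n) Gr. apply. by []. 
move=> _ [_ [B [mB ->]] <-]; rewrite setTI Phi_rect.
apply: sub_sigma_algebra; apply: Gr_rect => i; exact: phi_pre.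
Qed.

Definition PhiU : U -> U := Phi R n.
HB.instance Definition _ := isMeasurableFun.Build _ _ U U PhiU mPhi.

Lemma cj_itv i : (i < L)%N -> 0 <= cj R n i < 1.
Proof.
move=> iL; rewrite /cj; apply/andP; split; first by rewrite divr_ge0.
by rewrite ltr_pdivrMr ?ltr0n // mul1r ltr_nat.
Qed.

Lemma dval_bnd (x : U) : 0 <= dval L x < L%:Z.
Proof. by rewrite /dval modz_ge0 //= ltz_pmod. Qed.

Lemma dval_Phi_iff (x : U) k : (k.+1 < L)%N ->
  (dval L (Phi R n x) = k.+1%:Z) <-> (dval L x = k%:Z).
Proof.
move=> kL; rewrite dval_Phi.
have /andP[u0 uL] := dval_bnd x.
move: u0 uL; set u := dval L x => u0 uL.
split.
  case: (ltrP (u + 1) L%:Z) => h.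
    rewrite modz_small; last by apply/andP; split; lia.
    move=> e; lia.
  have -> : u + 1 = L%:Z by lia.
  rewrite modzz => e; lia.
move=> ->; rewrite modz_small; [lia|apply/andP; split; lia].
Qed.

Definition FB (B : nat -> set R) : set U :=
  \bigcap_(i in `I_L) ((fun x : U => omega L x i) @^-1` B i).
Definition AB (B : nat -> set R) (k : nat) : set U :=
  [set x : U | dval L x = k%:Z] `&` FB B.

Lemma mAB B k : (forall i, measurable (B i)) -> measurable (AB B k).
Proof. by move=> mB; apply: measurableI; [exact: mDk|exact: mF]. Qed.

Lemma Phi_AB B k : (k.+1 < L)%N -> Phi R n @^-1` AB B k.+1 = AB B k.
Proof.
move=> kL; apply/seteqP; split => x /=.
  move=> [h1 h2]; split; first by apply/(dval_Phi_iff x _ kL).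
  by move=> i iL; have := h2 i iL; rewrite /= omega_Phi.
move=> [h1 h2]; split; first by apply/(dval_Phi_iff x _ kL).
by move=> i iL; rewrite /= omega_Phi; exact: h2.
Qed.

Context d (T : measurableType d) (P : probability T R) (alpha : nat -> T -> R).
Hypothesis Ha : iid_uniform_half P L alpha.

Definition Xf : T -> U := fun t => (fun j => alpha j t).

Lemma mX : measurable_fun setT Xf.
Proof.
have := @measurability _ _ T U setT Xf Gr; apply; first by [].
move=> _ [_ [B [mB ->]] <-]; rewrite setTI.
apply: bigcap_measurableType => i iL.
rewrite -[_ @^-1` _]setTI; exact: (Ha.1 i iL measurableT _ (mB i)).
Qed.

HB.instance Definition _ := isMeasurableFun.Build _ _ T U Xf mX.

Definition mu := distribution P Xf.
Definition nu := distribution mu PhiU.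

Lemma mu_rect B : (forall i, measurable (B i)) ->
  mu (rect B) = (\prod_(i < L) (lebesgue_measure (B i `&` Iopen)))%E.
Proof. by move=> mB; exact: (Ha.2 B mB). Qed.

Lemma nu_rect B : (forall i, measurable (B i)) ->
  nu (rect B) = (\prod_(i < L) (lebesgue_measure (B i `&` Iopen)))%E.
Proof.
move=> mB; rewrite /nu /distribution /pushforward /PhiU Phi_rect.
transitivity (\prod_(i < L) lebesgue_measure ((phi (cj R n i) @^-1` B i) `&` Iopen))%E.
  by apply: mu_rect => i; exact: phi_pre.
apply: eq_bigr => i _; apply: leb_phi => //; exact: cj_itv.
Qed.

Lemma mu_nu E : measurable E -> mu E = nu E.
Proof.
move=> mE.
apply: (@g_sigma_algebra_measure_unique _ R U Gr _ (fun _ => setT)) => //.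
- by move=> A GA; apply: sub_sigma_algebra.
- move=> _; rewrite -rectT; apply: Gr_rect => i; exact: measurableT.
- by apply/seteqP; split => x // _; exists 0%N.
- exact: setI_Gr.
- move=> _ [B [mB ->]].
  transitivity (\prod_(i < L) lebesgue_measure (B i `&` Iopen))%E.
    exact: mu_rect.
  by apply/esym; exact: nu_rect.
- move=> _; change (P (Xf @^-1` setT) < +oo)%E.
  by rewrite preimage_setT probability_setT ltry.
Qed.

Lemma mu_AB_eq B k : (forall i, measurable (B i)) -> (k < L)%N ->
  mu (AB B k) = mu (AB B 0).
Proof.
move=> mB; elim: k => [//|k IH] kL.
rewrite -IH; last exact: ltnW.
rewrite (@mu_nu _ (mAB B k.+1 mB)).
change (mu (PhiU @^-1` AB B k.+1) = mu (AB B k)).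
by rewrite /PhiU Phi_AB.
Qed.

Lemma FB_union B : FB B = \big[setU/set0]_(k < L) AB B k.
Proof.
rewrite -bigcup_mkord; apply/seteqP; split => x /=; last by move=> [k _ []].
move=> hF; have /andP[h0 hL] := dval_bnd x.
exists `|dval L x|%N; first by rewrite /= -ltz_nat gez0_abs.
by split => //=; rewrite gez0_abs.
Qed.

Lemma main_mu B k : (forall i, measurable (B i)) -> (k < L)%N ->
  mu (AB B k) = (((L%:R : R)^-1)%:E * mu (FB B))%E.
Proof.
move=> mB kL.
have -> : mu (FB B) = (\sum_(i < L) mu (AB B i))%E.
  rewrite FB_union; apply: measure_semi_additive_ord_I.
  - by move=> i _; exact: (mAB B i mB).
  - by move=> i j _ _ [x [[h1 _] [h2 _]]]; move: h1 h2 => /= -> [].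
  - by apply: bigsetU_measurable => i _; exact: (mAB B i mB).
rewrite (eq_bigr (fun _ => mu (AB B 0))); last by move=> i _; exact: mu_AB_eq.
have sumc (x : \bar R) m : (\sum_(i < m) x)%E = ((m%:R)%:E * x)%E.
  elim: m => [|m IHm]; first by rewrite big_ord0 mul0e.
  rewrite big_ord_recr /= IHm -natr1 EFinD ge0_muleDl ?lee_fin // mul1e //.
by rewrite sumc muleA -EFinM mulVf ?mul1e ?mu_AB_eq.
Qed.
End Meas.

Theorem lemma3 (d : measure_display) (T : measurableType d) (R : realType)
    (P : probability T R) (L : nat) (alpha : nat -> T -> R) :
  (0 < L)%N ->
  iid_uniform_half P L alpha ->
  forall k : nat, (k < L)%N ->
  forall B : nat -> set R, (forall i, measurable (B i)) ->
  P ([set t | dval L (fun j => alpha j t) = k%:Z] `&`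
     \bigcap_(i in `I_L) ((fun t => omega L (fun j => alpha j t) i) @^-1` B i))
  = (((L%:R : R)^-1)%:E *
    P (\bigcap_(i in `I_L) ((fun t => omega L (fun j => alpha j t) i) @^-1` B i)))%E.
Proof.
case: L alpha => [//|n] alpha _ Ha k kL B mB.
exact: (@main_mu R n d T P alpha Ha B k mB kL).
Qed.
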